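(* Let $k\le n$ be a positive integer. Suppose $f:2^E\times O^E\to\mathbb{R}_{\ge0}$ is worst-case monotone and worst-case submodular with respect to $p(\phi)$ and satisfies minimal dependency. Let $\pi^g$ be the adaptive worst-case greedy policy for cardinality $k$, and let $\pi^*_{wc}$ maximize $f_{wc}(\pi)$ over all policies $\pi$ with $|E(\pi,\phi)|\le k$ for all $\phi\in U^+$. Then $f_{wc}(\pi^g)\ge(1-1/e)\,f_{wc}(\pi^*_{wc})$.
   Context: Setting. $E$ is a finite set of $n$ items and $O$ a finite set of states. A realization is a function $\phi:E\to O$; $p$ is a probability distribution (prior) on the set of all realizations, $\Phi$ denotes a random realization with law $p$, and $U^+=\{\phi: p(\phi)>0\}$. A partial realization is a function $\psi:S\to O$ with $S\subseteq E$, $\mathrm{dom}(\psi)=S$; it is identified with the set of pairs $\{(e,\psi(e)):e\in S\}$, so $\psi\subseteq\psi'$ means $\mathrm{dom}(\psi)\subseteq\mathrm{dom}(\psi')$ and they agree on $\mathrm{dom}(\psi)$. A realization $\phi$ is consistent with $\psi$, written $\phi\sim\psi$, if it agrees with $\psi$ on $\mathrm{dom}(\psi)$. Only partial realizations with $\Pr[\Phi\sim\psi]>0$ are considered, and $p(\phi\mid\psi)=\Pr[\Phi=\phi\mid\Phi\sim\psi]$. For $S\subseteq E$ and a partial realization $\psi$, $f(S,\psi)=\mathbb{E}[f(S,\Phi)\mid\Phi\sim\psi]$. For $e\notin\mathrm{dom}(\psi)$, let $O(e,\psi)=\{o\in O:\exists\phi\text{ with }p(\phi\mid\psi)>0,\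 \phi(e)=o\}$ and define the worst-case marginal utility $f_{wc}(e\mid\psi)=\min_{o\in O(e,\psi)}\{f(\mathrm{dom}(\psi)\cup\{e\},\psi\cup\{(e,o)\})-f(\mathrm{dom}(\psi),\psi)\}$. $f$ is worst-case submodular if $f_{wc}(e\mid\psi)\ge f_{wc}(e\mid\psi')$ for all partial realizations $\psi\subseteq\psi'$ and all $e\in E\setminus\mathrm{dom}(\psi')$; it is worst-case monotone if $f_{wc}(e\mid\psi)\ge0$ for all $\psi$ and $e\notin\mathrm{dom}(\psi)$. $f$ satisfies minimal dependency if $f(\mathrm{dom}(\psi),\psi)=f(\mathrm{dom}(\psi),\phi)$ for every partial realization $\psi$ and every $\phi\in U^+$ with $\phi\sim\psi$. Policies. A (deterministic) policy $\pi$ is a rule which, given the current observation (the partial realization of the items selected so far), either selects a new item or stops; after an item $e$ is selected under realization $\phi$, the state $\phi(e)$ is observed. $E(\pi,\phi)$ is the set of items selected by $\pi$ under $\phi$. The worst-case utility is $f_{wc}(\pi)=\min_{\phi\in U^+}f(E(\pi,\phi),\phi)$. Adaptive worst-case greedy policy for cardinality $k$, $\pi^g$: start with $\psi_0=\emptyset$; for $t=1,\dots,k$ select $e_t\in\arg\max_{e\in E\setminus\mathrm{dom}(\psi_{t-1})}f_{wc}(e\mid\psi_{t-1})$ (ties broken arbitrarily), observe $\Phi(e_t)$, and set $\psi_t=\psi_{t-1}\cup\{(e_t,\Phi(e_t))\}$. *)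

(* Defs.v *)
From HB Require Import structures.
From mathcomp Require Import all_boot all_order all_algebra.
From mathcomp Require Import reals sequences.
Set Implicit Arguments. Unset Strict Implicit. Unset Printing Implicit Defensive.
Import Order.TTheory GRing.Theory Num.Theory.
Local Open Scope ring_scope.

Section AdaptiveWC.
Variables (R : realType) (E O : finType).

(* realizations: {ffun E -> O};  partial realizations: {ffun E -> option O},
   with domain the set of items mapped to Some _. *)
Definition preal := {ffun E -> option O}.

Definition pempty : preal := [ffun _ => None].

Definition pdom (psi : preal) : {set E} := [set e | psi e != None].

Definition psub (psi psi' : preal) : Prop :=
  forall e, psi e != None -> psi' e = psi e.

Definition consistent (phi : {ffun E -> O}) (psi : preal) : bool :=
  [forall e, (psi e == None) || (psi e == Some (phi e))].

Definition pext (psi : preal) (e : E) (o : O) : preal :=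
  [ffun x => if x == e then Some o else psi x].

(* minimum of F over a finite set A (0 if A is empty; never used that way) *)
Definition minover (T : finType) (A : {set T}) (F : T -> R) : R :=
  match [pick x in A] with
  | Some x0 => \big[Num.min/F x0]_(x in A) F x
  | None => 0
  end.

Variable p : {ffun E -> O} -> R.
Variable f : {set E} -> {ffun E -> O} -> R.

Definition prc (psi : preal) : R := \sum_(phi | consistent phi psi) p phi.

Definition pcond (phi : {ffun E -> O}) (psi : preal) : R :=
  if consistent phi psi then p phi / prc psi else 0.

Definition fexp (S : {set E}) (psi : preal) : R :=
  (\sum_(phi | consistent phi psi) p phi * f S phi) / prc psi.

Definition Oset (e : E) (psi : preal) : {set O} :=
  [set o | [exists phi, (0 < pcond phi psi) && (phi e == o)]].

Definition fwc (e : E) (psi : preal) : R :=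
  minover (Oset e psi)
    (fun o => fexp (e |: pdom psi) (pext psi e o) - fexp (pdom psi) psi).

Definition wc_submodular : Prop :=
  forall psi psi' e, 0 < prc psi -> 0 < prc psi' -> psub psi psi' ->
    e \notin pdom psi' -> fwc e psi' <= fwc e psi.

Definition wc_monotone : Prop :=
  forall psi e, 0 < prc psi -> e \notin pdom psi -> 0 <= fwc e psi.

Definition minimal_dependency : Prop :=
  forall psi phi, 0 < prc psi -> 0 < p phi -> consistent phi psi ->
    fexp (pdom psi) psi = f (pdom psi) phi.

(* Deterministic policies: given the current observation, select an item
   (Some e) or stop (None).  Selecting an already-selected item is treated as
   stopping (no new observation is made). *)
Definition policy := preal -> option E.

Definition step (pi : policy) (phi : {ffun E -> O}) (psi : preal) : preal :=
  match pi psi with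
  | Some e => if psi e == None then pext psi e (phi e) else psi
  | None => psi
  end.

(* final observation: a policy makes at most #|E| selections *)
Definition run (pi : policy) (phi : {ffun E -> O}) : preal :=
  iter #|E| (step pi phi) pempty.

Definition Esel (pi : policy) (phi : {ffun E -> O}) : {set E} :=
  pdom (run pi phi).

Definition Uplus : {set {ffun E -> O}} := [set phi | 0 < p phi].

Definition fwc_pol (pi : policy) : R :=
  minover Uplus (fun phi => f (Esel pi phi) phi).

Definition card_bounded (k : nat) (pi : policy) : Prop :=
  forall phi, 0 < p phi -> (#|Esel pi phi| <= k)%N.

Definition greedy_policy (k : nat) (pi : policy) : Prop :=
  forall psi, 0 < prc psi ->
    if (#|pdom psi| < k)%N then
      exists e, [/\ pi psi = Some e, e \notin pdom psi &
                  forall e', e' \notin pdom psi -> fwc e' psi <= fwc e psi]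
    else pi psi = None.

End AdaptiveWC.

(* Main.v *)
Require Import Defs.
From HB Require Import structures.
From mathcomp Require Import all_boot all_order all_algebra.
From mathcomp Require Import reals sequences exp lra ring.
Import Order.TTheory GRing.Theory Num.Theory.
Local Open Scope ring_scope.
Set Implicit Arguments. Unset Strict Implicit. Unset Printing Implicit Defensive.

Lemma ar2 (R : realType) (a G M n c : R) : G <= M ->
  a + G + (n - (c + 1)) * M <= a + (n - c) * M.
Proof.
move=> H; have -> : (n - (c + 1)) * M = (n - c) * M - M by ring.
lra.
Qed.
Lemma ar1 (R : realType) (a M n c : R) : 0 <= M ->
  a + (n - (c + 1)) * M <= a + (n - c) * M.
Proof.
move=> H; have -> : (n - (c + 1)) * M = (n - c) * M - M by ring.
lra.
Qed.

Section Aux.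
Variables (R : realType) (E O : finType).
Implicit Types (psi chi : preal E O) (phi : {ffun E -> O}).

Lemma minover_le (T : finType) (A : {set T}) (F : T -> R) x :
  x \in A -> minover A F <= F x.
Proof.
move=> xA; rewrite /minover; case: pickP => [x0 _|/(_ x)]; last by rewrite xA.
rewrite (bigD1 x) //=; by rewrite ge_min lexx.
Qed.

Lemma minover_ex (T : finType) (A : {set T}) (F : T -> R) x :
  x \in A -> exists2 y, y \in A & minover A F = F y.
Proof.
move=> xA; rewrite /minover; case: pickP => [x0 x0A|/(_ x)]; last by rewrite xA.
elim/big_ind: _ => [|a b [ya ? ->] [yb ? ->]|y yA]; first by exists x0.
- rewrite minEle; case: ifP => _; [by exists ya| by exists yb].
- by exists y.
Qed.

Lemma consistentP phi psi : reflect (forall e o, psi e = Some o -> phi e = o)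
  (consistent phi psi).
Proof.
apply: (iffP forallP) => [C e o He|C e].
  by move: (C e); rewrite He /= => /eqP [].
by case He: (psi e) => [o|] //=; rewrite (C _ _ He).
Qed.

Lemma consistent_sub phi psi chi : consistent phi chi -> psub psi chi ->
  consistent phi psi.
Proof.
move=> /consistentP C S; apply/consistentP => e o He; apply: C.
by rewrite S // He.
Qed.



Lemma consistent_pext phi psi e o : psi e = None ->
  consistent phi (pext psi e o) = consistent phi psi && (phi e == o).
Proof.
move=> Hn; apply/consistentP/andP => [C|[/consistentP C /eqP <-] x o'].
  split; last by apply/eqP; apply: C; rewrite ffunE eqxx.
  apply/consistentP => x o' Hx; apply: C; rewrite ffunE; case: eqP => // xe.
  by move: Hx; rewrite xe Hn.
rewrite ffunE; case: eqP => [-> [] //|_]; exact: C.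
Qed.

Lemma pdom_pext psi e o : pdom (pext psi e o) = e |: pdom psi.
Proof.
by apply/setP => x; rewrite !inE ffunE; case: (x == e).
Qed.

Lemma pdom_pempty : pdom (pempty E O) = set0.
Proof. by apply/setP => x; rewrite !inE ffunE. Qed.

Lemma consistent_pempty phi : consistent phi (pempty E O).
Proof. by apply/forallP => x; rewrite ffunE. Qed.

Variable p : {ffun E -> O} -> R.
Hypothesis p_ge0 : forall phi, 0 <= p phi.

Lemma prc_gt0 psi phi : 0 < p phi -> consistent phi psi -> 0 < prc p psi.
Proof.
move=> Hp Hc; rewrite /prc (bigD1 phi) //=.
by apply: (lt_le_trans Hp); rewrite lerDl sumr_ge0.
Qed.



Lemma prc_gt0E psi : 0 < prc p psi -> exists phi, 0 < p phi /\ consistent phi psi.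
Proof.
move=> H.
have [phi /andP [Hc Hp]|none] := pickP (fun phi => consistent phi psi && (0 < p phi)).
  by exists phi.
suff : prc p psi = 0 by move=> E0; move: H; rewrite E0 ltxx.
rewrite /prc big1 // => phi Hc; move: (none phi); rewrite Hc /=.
by move=> /negbT; rewrite lt_def negb_and negbK (p_ge0 phi) orbF => /eqP.
Qed.

Lemma Oset_mem psi e o : 0 < prc p psi ->
  (o \in Oset p e psi) <-> exists phi, [/\ 0 < p phi, consistent phi psi & phi e = o].
Proof.
move=> Hpr; rewrite inE; split.
  move=> /existsP [phi /andP [Hc /eqP He]]; exists phi; move: Hc.
  rewrite /pcond; case: ifP => Hcs; last by rewrite ltxx.
  by rewrite pmulr_lgt0 ?invr_gt0.
move=> [phi [Hp Hc He]]; apply/existsP; exists phi.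
by rewrite /pcond Hc divr_gt0 //= He.
Qed.


Definition restr phi (A : {set E}) : preal E O :=
  [ffun x => if x \in A then Some (phi x) else None].

Lemma pdom_restr phi A : pdom (restr phi A) = A.
Proof. by apply/setP => x; rewrite !inE ffunE; case: (x \in A). Qed.

Lemma consistent_restr phi A : consistent phi (restr phi A).
Proof.
by apply/consistentP => x o; rewrite ffunE; case: (x \in A) => // -[].
Qed.

Lemma pext_restr phi A e : pext (restr phi A) e (phi e) = restr phi (e |: A).
Proof.
apply/ffunP => x; rewrite !ffunE !inE; case: eqP => [->|] //=.
Qed.

Variable f : {set E} -> {ffun E -> O} -> R.
Hypothesis Hmono : wc_monotone p f.
Hypothesis Hsub : wc_submodular p f.
Hypothesis Hmd : minimal_dependency p f.

Lemma fexp_md psi phi : 0 < p phi -> consistent phi psi ->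
  fexp p f (pdom psi) psi = f (pdom psi) phi.
Proof. by move=> Hp Hc; apply: Hmd => //; apply: prc_gt0 Hc. Qed.

Lemma fwc_le psi e o : 0 < prc p psi -> o \in Oset p e psi ->
  fwc p f e psi <= fexp p f (e |: pdom psi) (pext psi e o) - fexp p f (pdom psi) psi.
Proof. by move=> _ Ho; rewrite /fwc; apply: (minover_le _ Ho). Qed.

Lemma fwc_ex psi e : 0 < prc p psi -> exists2 o, o \in Oset p e psi &
  fwc p f e psi = fexp p f (e |: pdom psi) (pext psi e o) - fexp p f (pdom psi) psi.
Proof.
move=> Hpr; have [phi [Hp Hc]] := prc_gt0E Hpr.
have Ho : phi e \in Oset p e psi by apply/Oset_mem => //; exists phi.
exact: (minover_ex _ Ho).
Qed.

Lemma f_step phi (A : {set E}) e : 0 < p phi -> e \notin A -> f A phi <= f (e |: A) phi.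
Proof.
move=> Hp HeA; set r := restr phi A.
have Hc := consistent_restr phi A.
have Hpr : 0 < prc p r by apply: prc_gt0 Hc.
have Hm : 0 <= fwc p f e r by apply: Hmono; rewrite // pdom_restr.
have Ho : phi e \in Oset p e r by apply/Oset_mem => //; exists phi.
have := le_trans Hm (fwc_le Hpr Ho).
have := fexp_md Hp (consistent_restr phi (e |: A)); rewrite pdom_restr => E1.
have := fexp_md Hp (consistent_restr phi A); rewrite pdom_restr => E2.
by rewrite /r pext_restr E1 E2 subr_ge0.
Qed.

Lemma f_mono phi (A B : {set E}) : 0 < p phi -> A \subset B -> f A phi <= f B phi.
Proof.
move=> Hp; move Hn: #|B :\: A| => n; elim: n A Hn => [|n IH] A Hn HAB.
  move/eqP: Hn; rewrite cards_eq0 setD_eq0 => HBA.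
  by have -> : A = B by apply/eqP; rewrite eqEsubset HAB.
have : (0 < #|B :\: A|)%N by rewrite Hn.
rewrite card_gt0 => /set0Pn [e He].
have He' := He; rewrite inE in He'; case/andP: He' => HeA HeB.
apply: (le_trans (f_step Hp HeA)); apply: IH.
  move: Hn; rewrite (cardsD1 e) He add1n => -[<-].
  by rewrite setDDl setUC.
by rewrite subUset sub1set HeB HAB.
Qed.

Lemma adv psi M (pis : policy E O) : 0 < prc p psi ->
  (forall e, e \notin pdom psi -> fwc p f e psi <= M) -> 0 <= M ->
  forall m chi ps, 0 < prc p chi -> psub psi chi -> psub ps chi ->
  pdom chi = pdom psi :|: pdom ps ->
  exists phi, [/\ 0 < p phi, consistent phi chi &
   f (pdom psi :|: pdom (iter m (step pis phi) ps)) phi <=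
   fexp p f (pdom chi) chi +
     ((#|pdom (iter m (step pis phi) ps)|)%:R - (#|pdom ps|)%:R) * M].
Proof.
move=> Hpr HM HM0; elim=> [|m IH] chi ps Hchi Hs1 Hs2 Hd.
  have [phi [Hp Hc]] := prc_gt0E Hchi; exists phi; split => //=.
  by rewrite -Hd subrr mul0r addr0 (fexp_md Hp Hc).
have same : (forall phi, step pis phi ps = ps) -> exists phi, [/\ 0 < p phi, consistent phi chi &
   f (pdom psi :|: pdom (iter m.+1 (step pis phi) ps)) phi <=
   fexp p f (pdom chi) chi +
     ((#|pdom (iter m.+1 (step pis phi) ps)|)%:R - (#|pdom ps|)%:R) * M].
  move=> Hst; have [phi [Hp Hc Hb]] := IH chi ps Hchi Hs1 Hs2 Hd.
  by exists phi; split => //; rewrite iterSr Hst.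
case Hpi: (pis ps) => [e|]; last by apply: same => phi; rewrite /step Hpi.
case Hpe: (ps e) => [o0|]; first by apply: same => phi; rewrite /step Hpi Hpe.
have Hnps : e \notin pdom ps by rewrite inE Hpe.
have Hcard : forall o, #|pdom (pext ps e o)| = (#|pdom ps| + 1)%N.
  by move=> o; rewrite pdom_pext cardsU1 Hnps addnC.
case Hce: (chi e) => [o|].
  have Hepsi : e \in pdom psi.
    have : e \in pdom chi by rewrite inE Hce.
    by rewrite Hd inE (negbTE Hnps) orbF.
  have Hs2' : psub (pext ps e o) chi.
  move=> x; rewrite ffunE; case: (x =P e) => [-> _|_]; [by rewrite Hce | exact: Hs2].
  have Hd' : pdom chi = pdom psi :|: pdom (pext ps e o).
    rewrite pdom_pext Hd; apply/setP => x; rewrite !inE.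
    by case: (x =P e) => // ->; move: Hepsi; rewrite inE => ->.
  have [phi [Hp Hc Hb]] := IH chi _ Hchi Hs1 Hs2' Hd'.
  have Hphie : phi e = o by move/consistentP: Hc; apply.
  exists phi; split => //; rewrite iterSr.
  have -> : step pis phi ps = pext ps e o by rewrite /step Hpi Hpe /= Hphie.
  apply: (le_trans Hb); rewrite Hcard natrD; exact: ar1.
have [o Ho Hfwc] := fwc_ex e Hchi.
have [phi' [Hp' Hc' He']] := (Oset_mem e o Hchi).1 Ho.
have Hnchi : e \notin pdom chi by rewrite inE Hce.
have Hnpsi : e \notin pdom psi by move: Hnchi; rewrite Hd inE negb_or => /andP [].
have Hchi' : 0 < prc p (pext chi e o).
  by apply: (prc_gt0 Hp'); rewrite consistent_pext // Hc' He' eqxx.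
have Hs1' : psub psi (pext chi e o).
  move=> x Hx; rewrite ffunE; case: (x =P e) => [xe|_]; last exact: Hs1.
  by move: Hnpsi; rewrite inE -xe Hx.
have Hs2' : psub (pext ps e o) (pext chi e o).
  move=> x; rewrite !ffunE; case: (x =P e) => // _; exact: Hs2.
have Hd' : pdom (pext chi e o) = pdom psi :|: pdom (pext ps e o).
  rewrite !pdom_pext Hd; apply/setP => x; rewrite !inE; by case: (x == e) => /=; rewrite ?orbT.
have [phi [Hp Hc Hb]] := IH _ _ Hchi' Hs1' Hs2' Hd'.
move: Hc; rewrite consistent_pext // => /andP [Hc /eqP Hphie].
exists phi; split => //; rewrite iterSr.
have -> : step pis phi ps = pext ps e o by rewrite /step Hpi Hpe /= Hphie.
apply: (le_trans Hb); rewrite Hcard natrD pdom_pext.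
have -> : fexp p f (e |: pdom chi) (pext chi e o) =
  fexp p f (pdom chi) chi + fwc p f e chi by rewrite Hfwc addrC subrK.
apply: ar2; apply: le_trans (HM _ Hnpsi).
exact: Hsub.
Qed.

Lemma L1 psi M (pis : policy E O) k : card_bounded p k pis -> 0 < prc p psi ->
  (forall e, e \notin pdom psi -> fwc p f e psi <= M) -> 0 <= M ->
  fwc_pol p f pis <= fexp p f (pdom psi) psi + k%:R * M.
Proof.
move=> Hcb Hpr HM HM0.
have Hs1 : psub psi psi by [].
have Hs2 : psub (pempty E O) psi by move=> x; rewrite ffunE eqxx.
have Hd : pdom psi = pdom psi :|: pdom (pempty E O) by rewrite pdom_pempty setU0.
have [phi [Hp Hc Hb]] := adv pis Hpr HM HM0 #|E| Hpr Hs1 Hs2 Hd.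
have Hin : phi \in Uplus p by rewrite inE.
apply: (le_trans (minover_le _ Hin)); rewrite /Esel /run.
apply: (le_trans (f_mono Hp (subsetUr (pdom psi) _))).
apply: (le_trans Hb); rewrite pdom_pempty cards0 subr0 lerD2l.
by apply: ler_wpM2r => //; rewrite ler_nat; apply: Hcb.
Qed.

Lemma iter_fix (T : Type) (g : T -> T) y j : g y = y -> iter j g y = y.
Proof. by move=> H; elim: j => //= j ->. Qed.

Lemma main (k : nat) : \sum_phi p phi = 1 -> (forall S phi, 0 <= f S phi) ->
  (0 < k)%N -> (k <= #|E|)%N ->
  forall pig : policy E O, greedy_policy p f k pig ->
  forall pistar : policy E O, card_bounded p k pistar ->
  (1 - (expR (1 : R))^-1) * fwc_pol p f pistar <= fwc_pol p f pig.
Proof.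
move=> Hsum Hf0 Hk0 HkE pig Hg pistar Hcb.
set OPT := fwc_pol p f pistar.
have [phi1 [Hp1 _]] : exists phi, 0 < p phi /\ consistent phi (pempty E O).
  apply: prc_gt0E; rewrite /prc (eq_bigl xpredT) ?Hsum ?ltr01 // => phi.
  exact: consistent_pempty.
have Hin1 : phi1 \in Uplus p by rewrite inE.
have [phi0 Hin0 Hpig] := minover_ex (fun phi => f (Esel pig phi) phi) Hin1.
have Hp0 : 0 < p phi0 by rewrite inE in Hin0.
have OPT_ge0 : 0 <= OPT.
  have [phi2 _ H2] := minover_ex (fun phi => f (Esel pistar phi) phi) Hin1.
  rewrite /OPT /fwc_pol H2; exact: Hf0.
set c : R := k%:R^-1.
have kR0 : k%:R != 0 :> R by rewrite pnatr_eq0 -lt0n.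
have Hc0 : 0 <= c by rewrite /c invr_ge0 ler0n.
have Hc1 : 0 <= 1 - c.
  rewrite subr_ge0 /c invf_le1 ?ltr0n // ler1n //.
set ps := fun t => iter t (step pig phi0) (pempty E O).
have G : forall t, (t <= k)%N -> [/\ consistent phi0 (ps t), #|pdom (ps t)| = t &
    OPT - f (pdom (ps t)) phi0 <= (1 - c) ^+ t * OPT].
  elim=> [|t IH] Ht.
    split; first exact: consistent_pempty.
      by rewrite /ps /= pdom_pempty cards0.
    rewrite /ps /= pdom_pempty expr0 mul1r; have := Hf0 set0 phi0; lra.
  have Htk : (t < k)%N by [].
  have [Hc Hcard Hb] := IH (ltnW Htk).
  have Hpr := prc_gt0 Hp0 Hc.
  have := Hg _ Hpr; rewrite Hcard Htk => -[e [Hpi Hne Hmax]].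
  have Hnone : ps t e = None by move: Hne; rewrite inE negbK => /eqP.
  have Hst : ps t.+1 = pext (ps t) e (phi0 e).
    by rewrite /ps iterS -/(ps t) /step Hpi Hnone eqxx.
  have Hc' : consistent phi0 (ps t.+1) by rewrite Hst consistent_pext // Hc eqxx.
  split => //.
    by rewrite Hst pdom_pext cardsU1 Hne Hcard.
  set M := fwc p f e (ps t).
  have HM0 : 0 <= M by apply: Hmono.
  have Ho : phi0 e \in Oset p e (ps t) by apply/Oset_mem => //; exists phi0.
  have Hgain := fwc_le Hpr Ho.
  have H1 := fexp_md Hp0 Hc'; rewrite Hst pdom_pext in H1.
  rewrite (fexp_md Hp0 Hc) H1 -/M in Hgain.
  have HL := L1 Hcb Hpr Hmax HM0; rewrite (fexp_md Hp0 Hc) -/OPT -/M in HL.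
  rewrite Hst pdom_pext exprS -mulrA.
  set X := OPT - f (pdom (ps t)) phi0 in Hb HL.
  have h1 : c * X <= M.
    have : c * X <= c * (k%:R * M) by apply: ler_wpM2l => //; rewrite /X; lra.
    by rewrite mulrA mulVf // mul1r.
  have h2 : (1 - c) * X <= (1 - c) * ((1 - c) ^+ t * OPT) by apply: ler_wpM2l.
  rewrite mulrBl mul1r in h2.
  rewrite /X in h1 h2 Hb; lra.
have [Hck Hcardk Hbk] := G k (leqnn k).
have Hrun : run pig phi0 = ps k.
  rewrite /run -(subnK HkE) iterD -/(ps k); apply: iter_fix.
  have := Hg _ (prc_gt0 Hp0 Hck); rewrite Hcardk ltnn => Hn.
  by rewrite /step Hn.
have -> : fwc_pol p f pig = f (pdom (ps k)) phi0 by rewrite /fwc_pol Hpig /Esel Hrun.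
have Hexp : (1 - c) ^+ k <= (expR (1 : R))^-1.
  have h : 1 - c <= expR (- c) by have := expR_ge1Dx (- c).
  have n1 : 1 - c \in Num.nneg by rewrite nnegrE.
  have n2 : expR (- c) \in Num.nneg by rewrite nnegrE (ltW (expR_gt0 _)).
  have := lerXn2r k n1 n2 h.
  by rewrite -expRM_natl mulrN mulfV // expRN.
have := ler_wpM2r OPT_ge0 Hexp; lra.
Qed.
End Aux.

Theorem theorem2 (R : realType) (E O : finType)
  (p : {ffun E -> O} -> R) (f : {set E} -> {ffun E -> O} -> R) (k : nat) :
  (forall phi, 0 <= p phi) ->
  \sum_phi p phi = 1 ->
  (forall S phi, 0 <= f S phi) ->
  (0 < k)%N -> (k <= #|E|)%N ->
  wc_monotone p f ->
  wc_submodular p f ->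
  minimal_dependency p f ->
  forall pig : policy E O, greedy_policy p f k pig ->
  forall pistar : policy E O, card_bounded p k pistar ->
  (forall pi : policy E O, card_bounded p k pi ->
     fwc_pol p f pi <= fwc_pol p f pistar) ->
  (1 - (expR (1 : R))^-1) * fwc_pol p f pistar <= fwc_pol p f pig.
Proof.
move=> Hp Hs Hf Hk0 HkE Hm Hsb Hmd pig Hg pistar Hcb _.
exact: (main Hp Hm Hsb Hmd Hs Hf Hk0 HkE Hg Hcb).
Qed.
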